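(* Let $D>0$, $g>0$, $l_{\mathrm{c}}>0$, $c_{\infty}>0$ and $c_{\mathrm{s}}\ge 0$ be constants, and consider pairs $(l_{\infty},c)$ with $l_{\infty}>0$ and $c\in C^2([0,l_{\infty}])$ satisfying \[ D c''(x)-g c(x)=0\ (0<x<l_{\infty}),\qquad D c'(l_{\infty})=-gl_{\mathrm{c}}c_{\infty},\qquad c(l_{\infty})=c_{\infty},\qquad c(0)=c_{\mathrm{s}} \] (steady-state solutions). Such a pair exists if and only if $c_{\mathrm{s}}>c_{\infty}$. In that case the steady-state solution is unique: $l_{\infty}>0$ is uniquely determined and \[ c(x)=\frac{c_{\infty}}{2}\left[\left(1-l_{\mathrm{c}}\sqrt{\tfrac{g}{D}}\right)\mathrm{e}^{(x-l_{\infty})\sqrt{g/D}}+\left(1+l_{\mathrm{c}}\sqrt{\tfrac{g}{D}}\right)\mathrm{e}^{-(x-l_{\infty})\sqrt{g/D}}\right],\quad 0\le x\le l_{\infty}, \] which is a decreasing function.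
   Context: This is the steady-state problem of a one-dimensional axonal growth model without active transport ($a=0$): $D$ is the diffusion coefficient, $g$ the degradation rate, $l_{\mathrm{c}}$ the characteristic growth-cone length, $c_{\infty}$ the steady-state growth cone concentration, $c_{\mathrm{s}}$ the soma concentration, and $l_{\infty}$ the axon length. The length $l_{\infty}$ is the unique positive solution of $\frac12\left[\left(1-l_{\mathrm{c}}\sqrt{g/D}\right)\mathrm{e}^{-l_{\infty}\sqrt{g/D}}+\left(1+l_{\mathrm{c}}\sqrt{g/D}\right)\mathrm{e}^{l_{\infty}\sqrt{g/D}}\right]=c_{\mathrm{s}}/c_{\infty}$. *)

(* Defs.v *)
From Stdlib Require Import Reals.
From Coquelicot Require Import Coquelicot.
Open Scope R_scope.

Definition has_deriv_on (f f' : R -> R) (a b : R) : Prop :=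
  forall x, a <= x <= b ->
    filterlim (fun h => (f (x + h) - f x) / h)
      (within (fun h => h <> 0 /\ a <= x + h <= b) (locally 0))
      (locally (f' x)).

Definition continuous_on_cc (f : R -> R) (a b : R) : Prop :=
  forall x, a <= x <= b ->
    filterlim f (within (fun y => a <= y <= b) (locally x)) (locally (f x)).

Definition steady_state (D g lc cinf cs : R) (l : R) (c : R -> R) : Prop :=
  0 < l /\
  exists c1 c2 : R -> R,
    has_deriv_on c c1 0 l /\ has_deriv_on c1 c2 0 l /\ continuous_on_cc c2 0 l /\
    (forall x, 0 < x < l -> D * c2 x - g * c x = 0) /\
    D * c1 l = - g * lc * cinf /\
    c l = cinf /\
    c 0 = cs.

Definition profile (D g lc cinf l : R) (x : R) : R :=
  cinf / 2 *
  ((1 - lc * sqrt (g / D)) * exp ((x - l) * sqrt (g / D)) +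
   (1 + lc * sqrt (g / D)) * exp (- ((x - l) * sqrt (g / D)))).

(* Main.v *)
Require Import Defs.
From Stdlib Require Import Reals Lra.
From Coquelicot Require Import Coquelicot.
Open Scope R_scope.

Lemma ballR (x e y : R) : ball x e y <-> Rabs (y - x) < e.
Proof. reflexivity. Qed.

Lemma deriv_glob f f' a b : (forall x, is_derive f x (f' x)) -> has_deriv_on f f' a b.
Proof.
  intros H x _. apply filterlim_locally. intros eps.
  destruct (proj1 (is_derive_Reals f x (f' x)) (H x) eps (cond_pos eps)) as [d Hd].
  exists d. intros h Hh [Hne _]. apply ballR. apply Hd; auto.
  apply (proj1 (ballR _ _ _)) in Hh. replace h with (h - 0) by ring. exact Hh.
Qed.

Lemma cont_glob f a b : (forall x, continuous f x) -> continuous_on_cc f a b.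
Proof.
  intros H x _. eapply filterlim_filter_le_1. apply filter_le_within. apply H.
Qed.

Lemma deriv_interior f f' a b x : has_deriv_on f f' a b -> a < x < b -> is_derive f x (f' x).
Proof.
  intros H Hx. apply is_derive_Reals. intros eps Heps.
  specialize (H x ltac:(lra)).
  destruct (proj1 (filterlim_locally _ _) H (mkposreal eps Heps)) as [d Hd].
  assert (Hp : 0 < Rmin d (Rmin (x - a) (b - x))).
  { repeat apply Rmin_pos; try lra. apply cond_pos. }
  exists (mkposreal _ Hp). intros h Hne Hh. simpl in Hh.
  assert (h1 : Rabs h < d) by (eapply Rlt_le_trans; [apply Hh| apply Rmin_l]).
  assert (h2 : Rabs h < x - a) by (eapply Rlt_le_trans; [apply Hh| eapply Rle_trans; [apply Rmin_r|apply Rmin_l]]).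
  assert (h3 : Rabs h < b - x) by (eapply Rlt_le_trans; [apply Hh| eapply Rle_trans; [apply Rmin_r|apply Rmin_r]]).
  apply Rabs_def2 in h2. apply Rabs_def2 in h3.
  apply (Hd h).
  - apply ballR. now rewrite Rminus_0_r.
  - split; [exact Hne| lra].
Qed.

Lemma deriv_cont f f' a b : has_deriv_on f f' a b -> continuous_on_cc f a b.
Proof.
  intros H x Hx. apply filterlim_locally. intros eps.
  specialize (H x Hx).
  destruct (proj1 (filterlim_locally _ _) H (mkposreal 1 Rlt_0_1)) as [d Hd].
  set (M := Rabs (f' x) + 1).
  assert (HM : 0 < M) by (unfold M; pose proof (Rabs_pos (f' x)); lra).
  assert (Hp : 0 < Rmin d (eps / M)).
  { apply Rmin_pos. apply cond_pos. apply Rdiv_lt_0_compat; [apply cond_pos|lra]. }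
  exists (mkposreal _ Hp). intros y Hy Hyab. apply (proj1 (ballR _ _ _)) in Hy. simpl in Hy. apply ballR.
  destruct (Req_dec y x) as [->|Hne].
  { rewrite Rminus_eq_0, Rabs_R0. apply cond_pos. }
  assert (h1 : Rabs (y - x) < d) by (eapply Rlt_le_trans; [apply Hy| apply Rmin_l]).
  assert (h2 : Rabs (y - x) < eps / M) by (eapply Rlt_le_trans; [apply Hy| apply Rmin_r]).
  assert (Hq := Hd (y - x)).
  rewrite (Rplus_minus x y) in Hq.
  assert (Hq' : ball (f' x) 1 ((f y - f x) / (y - x))).
  { apply Hq. apply ballR. now rewrite Rminus_0_r. split; [lra | exact Hyab]. }
  apply (proj1 (ballR _ _ _)) in Hq'. simpl in Hq'.
  assert (Hyx : y - x <> 0) by lra.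
  replace (f y - f x) with ((f y - f x) / (y - x) * (y - x)) by (field; exact Hyx).
  rewrite Rabs_mult.
  assert (Habs : Rabs ((f y - f x) / (y - x)) <= M).
  { unfold M. pose proof (Rabs_triang_inv ((f y - f x) / (y - x)) (f' x)). idtac. lra. }
  apply Rle_lt_trans with (M * Rabs (y - x)).
  { apply Rmult_le_compat_r. apply Rabs_pos. exact Habs. }
  apply Rmult_lt_reg_l with (/ M). apply Rinv_0_lt_compat; lra.
  rewrite <- Rmult_assoc, Rinv_l by lra. rewrite Rmult_1_l.
  rewrite Rmult_comm. exact h2.
Qed.

Lemma const_interior (F : R -> R) a b : (forall x, a < x < b -> is_derive F x 0) ->
  forall x y, a < x < b -> a < y < b -> F x = F y.
Proof.
  intros H x y Hx Hy.
  destruct (MVT_gen F x y (fun _ => 0)) as [c [_ Hc]].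
  - intros z Hz. apply H. split.
    + apply Rle_lt_trans with (Rmin x y); [apply Rmin_glb; lra | apply Hz].
    + apply Rlt_le_trans with (Rmax x y); [apply Hz | apply Rmax_lub; lra].
  - intros z Hz. apply continuity_pt_filterlim. apply (ex_derive_continuous (K:=R_AbsRing) (V:=R_NormedModule) F z).
    eexists. apply H. split.
    + apply Rlt_le_trans with (Rmin x y); [apply Rmin_glb_lt; lra | apply Hz].
    + apply Rle_lt_trans with (Rmax x y); [apply Hz | apply Rmax_lub_lt; lra].
  - lra.
Qed.

Lemma lim_eq_r (f h : R -> R) a b : a < b -> continuous_on_cc f a b -> (forall x, continuous h x) ->
  (forall x, a < x < b -> f x = h x) -> f b = h b.
Proof.
  intros Hab Hf Hh Heq. destruct (Req_dec (f b) (h b)) as [E|Hne]; [exact E|exfalso].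
  set (e := Rabs (f b - h b) / 2).
  assert (He : 0 < e) by (unfold e; apply Rdiv_lt_0_compat; [apply Rabs_pos_lt; lra | lra]).
  assert (Hf1 := Hf b ltac:(lra)). unfold continuous_on_cc in Hf1. rewrite filterlim_locally in Hf1. destruct (Hf1 (mkposreal e He)) as [d1 H1].
  assert (Hh1 := Hh b). unfold continuous in Hh1. rewrite filterlim_locally in Hh1. destruct (Hh1 (mkposreal e He)) as [d2 H2].
  set (t := Rmin (Rmin d1 d2) (b - a) / 2).
  assert (Ht : 0 < t) by (unfold t; apply Rdiv_lt_0_compat; [repeat apply Rmin_pos; try apply cond_pos; lra| lra]).
  assert (Ht1 : t < d1). { unfold t. pose proof (Rmin_l (Rmin d1 d2) (b-a)). pose proof (Rmin_l d1 d2). pose proof (cond_pos d1). lra. }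
  assert (Ht2 : t < d2). { unfold t. pose proof (Rmin_l (Rmin d1 d2) (b-a)). pose proof (Rmin_r d1 d2). pose proof (cond_pos d2). lra. }
  assert (Ht3 : t < b - a). { unfold t. pose proof (Rmin_r (Rmin d1 d2) (b-a)). lra. }
  assert (Hb : Rabs (b - t - b) = t) by (replace (b - t - b) with (-t) by ring; rewrite Rabs_Ropp; apply Rabs_right; lra).
  specialize (H1 (b - t)). specialize (H2 (b - t)).
  assert (A1 : ball (f b) e (f (b - t))) by (apply H1; [apply ballR; simpl; lra | lra]).
  assert (A2 : ball (h b) e (h (b - t))) by (apply H2; apply ballR; simpl; lra).
  apply (proj1 (ballR _ _ _)) in A1. apply (proj1 (ballR _ _ _)) in A2. rewrite Heq in A1 by lra.
  pose proof (Rabs_triang (f b - h (b - t)) (h (b - t) - h b)).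
  replace (f b - h (b - t) + (h (b - t) - h b)) with (f b - h b) in H by ring.
  rewrite <- Rabs_Ropp in A1. replace (- (h (b - t) - f b)) with (f b - h (b - t)) in A1 by ring.
  unfold e in *. simpl in *. lra.
Qed.

Lemma lim_eq_l (f h : R -> R) a b : a < b -> continuous_on_cc f a b -> (forall x, continuous h x) ->
  (forall x, a < x < b -> f x = h x) -> f a = h a.
Proof.
  intros Hab Hf Hh Heq. destruct (Req_dec (f a) (h a)) as [E|Hne]; [exact E|exfalso].
  set (e := Rabs (f a - h a) / 2).
  assert (He : 0 < e) by (unfold e; apply Rdiv_lt_0_compat; [apply Rabs_pos_lt; lra | lra]).
  assert (Hf1 := Hf a ltac:(lra)). unfold continuous_on_cc in Hf1. rewrite filterlim_locally in Hf1. destruct (Hf1 (mkposreal e He)) as [d1 H1].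
  assert (Hh1 := Hh a). unfold continuous in Hh1. rewrite filterlim_locally in Hh1. destruct (Hh1 (mkposreal e He)) as [d2 H2].
  set (t := Rmin (Rmin d1 d2) (b - a) / 2).
  assert (Ht : 0 < t) by (unfold t; apply Rdiv_lt_0_compat; [repeat apply Rmin_pos; try apply cond_pos; lra| lra]).
  assert (Ht1 : t < d1). { unfold t. pose proof (Rmin_l (Rmin d1 d2) (b-a)). pose proof (Rmin_l d1 d2). pose proof (cond_pos d1). lra. }
  assert (Ht2 : t < d2). { unfold t. pose proof (Rmin_l (Rmin d1 d2) (b-a)). pose proof (Rmin_r d1 d2). pose proof (cond_pos d2). lra. }
  assert (Ht3 : t < b - a). { unfold t. pose proof (Rmin_r (Rmin d1 d2) (b-a)). lra. }
  assert (Hb : Rabs (a + t - a) = t) by (replace (a + t - a) with t by ring; apply Rabs_right; lra).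
  specialize (H1 (a + t)). specialize (H2 (a + t)).
  assert (A1 : ball (f a) e (f (a + t))) by (apply H1; [apply ballR; simpl; lra | lra]).
  assert (A2 : ball (h a) e (h (a + t))) by (apply H2; apply ballR; simpl; lra).
  apply (proj1 (ballR _ _ _)) in A1. apply (proj1 (ballR _ _ _)) in A2. rewrite Heq in A1 by lra.
  pose proof (Rabs_triang (f a - h (a + t)) (h (a + t) - h a)).
  replace (f a - h (a + t) + (h (a + t) - h a)) with (f a - h a) in H by ring.
  rewrite <- Rabs_Ropp in A1. replace (- (h (a + t) - f a)) with (f a - h (a + t)) in A1 by ring.
  unfold e in *. simpl in *. lra.
Qed.

Definition pr (k lc cinf l x : R) : R :=
  cinf / 2 * ((1 - lc * k) * exp ((x - l) * k) + (1 + lc * k) * exp (- ((x - l) * k))).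
Definition pr1 (k lc cinf l x : R) : R :=
  cinf / 2 * k * ((1 - lc * k) * exp ((x - l) * k) - (1 + lc * k) * exp (- ((x - l) * k))).

Lemma pr_d k lc cinf l x : is_derive (pr k lc cinf l) x (pr1 k lc cinf l x).
Proof. unfold pr, pr1. auto_derive; auto. unfold Rminus; ring. Qed.
Lemma pr1_d k lc cinf l x : is_derive (pr1 k lc cinf l) x (k * k * pr k lc cinf l x).
Proof. unfold pr, pr1. auto_derive; auto. unfold Rminus; ring. Qed.

Lemma uniq k lc cinf l (c c1 c2 : R -> R) : 0 < k -> 0 < l ->
  has_deriv_on c c1 0 l -> has_deriv_on c1 c2 0 l ->
  (forall x, 0 < x < l -> c2 x = k * k * c x) ->
  c1 l = - (k * k * lc * cinf) -> c l = cinf ->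
  forall x, 0 <= x <= l -> c x = pr k lc cinf l x.
Proof.
  intros Hk Hl Hc Hc1 Hode H1l Hcl.
  set (p := pr k lc cinf l). set (p1 := pr1 k lc cinf l).
  set (U := fun x => (c1 x - p1 x - k * (c x - p x)) * exp (k * x)).
  set (V := fun x => (c1 x - p1 x + k * (c x - p x)) * exp (- (k * x))).
  assert (dU : forall x, 0 < x < l -> is_derive U x 0).
  { intros x Hx. unfold U.
    pose proof (deriv_interior _ _ _ _ _ Hc Hx) as d0.
    pose proof (deriv_interior _ _ _ _ _ Hc1 Hx) as d1.
    assert (de : is_derive (fun x => exp (k * x)) x (k * exp (k * x))).
    { auto_derive; auto. ring. }
    eapply is_derive_ext. intros t. reflexivity.
    replace 0 with ((c2 x - k * k * p x - k * (c1 x - p1 x)) * exp (k * x) + (c1 x - p1 x - k * (c x - p x)) * (k * exp (k * x))).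
    2:{ rewrite Hode by exact Hx. ring. }
    apply (is_derive_mult (fun x => c1 x - p1 x - k * (c x - p x)) (fun x => exp (k * x))); auto.
    apply (is_derive_minus (fun x => c1 x - p1 x) (fun x => k * (c x - p x))).
    apply (is_derive_minus c1 p1); auto. apply pr1_d.
    apply (is_derive_scal (fun x => c x - p x)).
    apply (is_derive_minus c p); auto. apply pr_d.
    intros; apply Rmult_comm. }
  assert (dV : forall x, 0 < x < l -> is_derive V x 0).
  { intros x Hx. unfold V.
    pose proof (deriv_interior _ _ _ _ _ Hc Hx) as d0.
    pose proof (deriv_interior _ _ _ _ _ Hc1 Hx) as d1.
    assert (de : is_derive (fun x => exp (- (k * x))) x (- k * exp (- (k * x)))).
    { auto_derive; auto. ring. }
    replace 0 with ((c2 x - k * k * p x + k * (c1 x - p1 x)) * exp (- (k * x)) + (c1 x - p1 x + k * (c x - p x)) * (- k * exp (- (k * x)))).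
    2:{ rewrite Hode by exact Hx. ring. }
    apply (is_derive_mult (fun x => c1 x - p1 x + k * (c x - p x)) (fun x => exp (- (k * x)))); auto.
    apply (is_derive_plus (fun x => c1 x - p1 x) (fun x => k * (c x - p x))).
    apply (is_derive_minus c1 p1); auto. apply pr1_d.
    apply (is_derive_scal (fun x => c x - p x)).
    apply (is_derive_minus c p); auto. apply pr_d.
    intros; apply Rmult_comm. }
  set (K := U (l / 2)). set (M := V (l / 2)).
  assert (HU : forall x, 0 < x < l -> U x = K).
  { intros x Hx. apply (const_interior U 0 l dU); lra. }
  assert (HV : forall x, 0 < x < l -> V x = M).
  { intros x Hx. apply (const_interior V 0 l dV); lra. }
  set (h := fun x => p x + (M * exp (k * x) - K * exp (- (k * x))) / (2 * k)).
  set (h1 := fun x => p1 x + (M * exp (k * x) + K * exp (- (k * x))) / 2).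
  assert (Eexp : forall x, exp (k * x) * exp (- (k * x)) = 1).
  { intros x. rewrite <- exp_plus. replace (k * x + - (k * x)) with 0 by ring. apply exp_0. }
  assert (Hch : forall x, 0 < x < l -> c x = h x /\ c1 x = h1 x).
  { intros x Hx. specialize (HU x Hx). specialize (HV x Hx). unfold U, V in *.
    unfold h, h1. rewrite <- HU, <- HV. specialize (Eexp x).
    assert (Eexp' : exp (- (k * x)) * exp (k * x) = 1) by (rewrite Rmult_comm; exact Eexp).
    rewrite !Rmult_assoc, Eexp, Eexp'. split; field; lra. }
  assert (hc : forall x, continuous h x).
  { intros x. apply (ex_derive_continuous (K:=R_AbsRing) (V:=R_NormedModule) h x).
    unfold h, p, pr. auto_derive. auto. }
  assert (hc1 : forall x, continuous h1 x).
  { intros x. apply (ex_derive_continuous (K:=R_AbsRing) (V:=R_NormedModule) h1 x).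
    unfold h1, p1, pr1. auto_derive. auto. }
  assert (Ll := lim_eq_r c h 0 l Hl (deriv_cont _ _ _ _ Hc) hc (fun x Hx => proj1 (Hch x Hx))).
  assert (Ll1 := lim_eq_r c1 h1 0 l Hl (deriv_cont _ _ _ _ Hc1) hc1 (fun x Hx => proj2 (Hch x Hx))).
  assert (L0 := lim_eq_l c h 0 l Hl (deriv_cont _ _ _ _ Hc) hc (fun x Hx => proj1 (Hch x Hx))).
  assert (pl : p l = cinf).
  { unfold p, pr. rewrite Rminus_eq_0, Rmult_0_l, Ropp_0, exp_0. field. }
  assert (p1l : p1 l = - (k * k * lc * cinf)).
  { unfold p1, pr1. rewrite Rminus_eq_0, Rmult_0_l, Ropp_0, exp_0. field. }
  unfold h, h1 in Ll, Ll1. rewrite pl, Hcl in Ll. rewrite p1l, H1l in Ll1.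
  assert (Epos1 := exp_pos (k * l)). assert (Epos2 := exp_pos (- (k * l))).
  assert (A : M * exp (k * l) - K * exp (- (k * l)) = 0).
  { apply Rmult_eq_reg_r with (/ (2 * k)). 2: apply Rinv_neq_0_compat; lra.
    rewrite Rmult_0_l. unfold Rdiv in Ll. lra. }
  assert (B : M * exp (k * l) + K * exp (- (k * l)) = 0) by lra.
  assert (M0 : M = 0) by nra. assert (K0 : K = 0) by nra.
  assert (hp : forall x, h x = p x).
  { intros x. unfold h. rewrite M0, K0. field. lra. }
  intros x Hx. destruct (Req_dec x 0) as [->|H0].
  - rewrite L0, hp. reflexivity.
  - destruct (Req_dec x l) as [->|H2].
    + rewrite Hcl. symmetry. exact pl.
    + rewrite (proj1 (Hch x ltac:(lra))), hp. reflexivity.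
Qed.

Lemma alg X Y m cinf : 0 < X < Y -> X * Y <= 1 -> 0 < m -> 0 < cinf ->
  cinf / 2 * ((1 - m) * Y + (1 + m) * / Y) < cinf / 2 * ((1 - m) * X + (1 + m) * / X).
Proof.
  intros HXY H1 Hm Hc.
  assert (E : cinf / 2 * ((1 - m) * X + (1 + m) * / X) - cinf / 2 * ((1 - m) * Y + (1 + m) * / Y)
     = cinf / 2 * ((Y - X) * ((1 - X * Y) + m * (1 + X * Y)) / (X * Y))) by (field; lra).
  assert (0 < cinf / 2 * ((Y - X) * ((1 - X * Y) + m * (1 + X * Y)) / (X * Y))).
  { apply Rmult_lt_0_compat. lra. apply Rdiv_lt_0_compat. assert (0 < X * Y) by nra. assert (0 < m * (1 + X * Y)) by nra.
    apply Rmult_lt_0_compat. lra. assert (0 <= 1 - X*Y) by lra. clear E. lra. nra. }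
  lra.
Qed.

Lemma exp_le_mono x y : x <= y -> exp x <= exp y.
Proof. intros H. destruct (Rle_lt_or_eq_dec x y H) as [h|h]. left; now apply exp_increasing. right; now subst. Qed.

Lemma f_incr k lc cinf a b : 0 < k -> 0 < lc -> 0 < cinf -> 0 <= a < b ->
  pr k lc cinf a 0 < pr k lc cinf b 0.
Proof.
  intros Hk Hl Hc Hab. unfold pr.
  rewrite (exp_Ropp ((0 - a) * k)), (exp_Ropp ((0 - b) * k)).
  apply alg; try nra.
  - split. apply exp_pos. apply exp_increasing. nra.
  - rewrite <- exp_plus. rewrite <- exp_0. apply exp_le_mono. nra.
Qed.

Lemma prof_decr k lc cinf l x y : 0 < k -> 0 < lc -> 0 < cinf -> 0 <= x -> x < y -> y <= l ->
  pr k lc cinf l y < pr k lc cinf l x.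
Proof.
  intros Hk Hl Hc H1 H2 H3. unfold pr.
  rewrite (exp_Ropp ((x - l) * k)), (exp_Ropp ((y - l) * k)).
  apply alg; try nra.
  - split. apply exp_pos. apply exp_increasing. nra.
  - rewrite <- exp_plus. rewrite <- exp_0. apply exp_le_mono. nra.
Qed.

Lemma sol_prof D g lc cinf cs l c : 0 < D -> 0 < g -> steady_state D g lc cinf cs l c ->
  0 < l /\ (forall x, 0 <= x <= l -> c x = pr (sqrt (g / D)) lc cinf l x) /\
  pr (sqrt (g / D)) lc cinf l 0 = cs.
Proof.
  intros HD Hg [Hl [c1 [c2 [d1 [d2 [_ [Hode [H1 [H2 H3]]]]]]]]].
  set (k := sqrt (g / D)).
  assert (Hk : 0 < k) by (apply sqrt_lt_R0; apply Rdiv_lt_0_compat; lra).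
  assert (Hkk : k * k = g / D) by (apply sqrt_sqrt; apply Rlt_le, Rdiv_lt_0_compat; lra).
  assert (Hg' : g = D * (k * k)) by (rewrite Hkk; field; lra).
  assert (U := uniq k lc cinf l c c1 c2 Hk Hl d1 d2).
  assert (E : forall x, 0 <= x <= l -> c x = pr k lc cinf l x).
  { apply U.
    - intros x Hx. specialize (Hode x Hx). rewrite Hg' in Hode.
      apply Rmult_eq_reg_l with D; [|lra]. lra.
    - apply Rmult_eq_reg_l with D; [|lra]. rewrite H1, Hg'. ring.
    - exact H2. }
  split; [exact Hl| split; [exact E|]].
  rewrite <- E by lra. exact H3.
Qed.

Theorem theorem2 (D g lc cinf cs : R) :
  0 < D -> 0 < g -> 0 < lc -> 0 < cinf -> 0 <= cs ->
  ((exists (l : R) (c : R -> R), steady_state D g lc cinf cs l c) <-> cinf < cs) /\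
  (cinf < cs ->
   exists l : R,
     (exists c : R -> R, steady_state D g lc cinf cs l c) /\
     (forall (l' : R) (c : R -> R), steady_state D g lc cinf cs l' c ->
        l' = l /\ forall x, 0 <= x <= l -> c x = profile D g lc cinf l x) /\
     (forall x y, 0 <= x -> x < y -> y <= l ->
        profile D g lc cinf l y < profile D g lc cinf l x)).
Proof.
  intros HD Hg Hlc Hc Hcs.
  assert (Hk : 0 < sqrt (g / D)) by (apply sqrt_lt_R0; apply Rdiv_lt_0_compat; lra).
  assert (Hkk : sqrt (g / D) * sqrt (g / D) = g / D) by (apply sqrt_sqrt; apply Rlt_le, Rdiv_lt_0_compat; lra).
  assert (Hg' : g = D * (sqrt (g / D) * sqrt (g / D))) by (rewrite Hkk; field; lra).
  change (profile D g lc cinf) with (pr (sqrt (g / D)) lc cinf).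
  set (k := sqrt (g / D)) in *.
  set (f := fun l => pr k lc cinf l 0).
  assert (f0 : f 0 = cinf).
  { unfold f, pr. replace ((0 - 0) * k) with 0 by ring. rewrite Ropp_0, exp_0. field. }
  assert (Ex : cinf < cs -> exists l, 0 < l /\ f l = cs).
  { intros Hlt.
    set (L := 2 * cs / (cinf * k)).
    assert (HL : 0 < L) by (unfold L; apply Rdiv_lt_0_compat; nra).
    assert (fL : cs < f L).
    { unfold f, pr. replace ((0 - L) * k) with (- (k * L)) by ring. rewrite Ropp_involutive.
      assert (e1 := exp_ineq1 (k * L) ltac:(nra)).
      assert (e2 : exp (- (k * L)) <= exp (k * L)) by (apply exp_le_mono; nra).
      assert (e3 := exp_pos (- (k * L))).
      assert (kL : k * L = 2 * cs / cinf) by (unfold L; field; split; lra).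
      set (E := exp (k * L)) in *. set (E' := exp (- (k * L))) in *.
      rewrite kL in e1.
      assert (cinf * (2 * cs / cinf) = 2 * cs) by (field; lra).
      assert (cinf * (E - (1 + 2 * cs / cinf)) > 0) by (apply Rmult_gt_0_compat; lra).
      assert (lc * k * (E - E') >= 0) by (apply Rle_ge, Rmult_le_pos; nra).
      nra. }
    assert (fc : continuity f).
    { intros x. apply continuity_pt_filterlim.
      apply (ex_derive_continuous (K:=R_AbsRing) (V:=R_NormedModule) f x).
      unfold f, pr. auto_derive. auto. }
    destruct (IVT_gen f 0 L cs fc) as [l [Hl1 Hl2]].
    { rewrite Rmin_left, Rmax_right; lra. }
    rewrite Rmin_left, Rmax_right in Hl1 by lra.
    exists l. split; [|exact Hl2].
    destruct (Req_dec l 0) as [->|Hne]; [lra|lra]. }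
  assert (Sol : forall l, 0 < l -> f l = cs -> steady_state D g lc cinf cs l (pr k lc cinf l)).
  { intros l Hl Hf. split; [exact Hl|].
    exists (pr1 k lc cinf l), (fun x => k * k * pr k lc cinf l x).
    split; [apply deriv_glob; intros; apply pr_d|].
    split; [apply deriv_glob; intros; apply pr1_d|].
    split.
    { apply cont_glob. intros x.
      apply (ex_derive_continuous (K:=R_AbsRing) (V:=R_NormedModule) _ x).
      unfold pr. auto_derive. auto. }
    split. { intros x _. rewrite Hg'. fold k. ring. }
    split. { unfold pr1. rewrite Rminus_eq_0, Rmult_0_l, Ropp_0, exp_0. rewrite Hg'. fold k. field. }
    split. { unfold pr. rewrite Rminus_eq_0, Rmult_0_l, Ropp_0, exp_0. field. }
    exact Hf. }
  assert (Inj : forall a b, 0 < a -> 0 < b -> f a = f b -> a = b).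
  { intros a b Ha Hb Hab. destruct (Rtotal_order a b) as [h|[h|h]]; auto.
    - pose proof (f_incr k lc cinf a b Hk Hlc Hc ltac:(lra)). unfold f in Hab. lra.
    - pose proof (f_incr k lc cinf b a Hk Hlc Hc ltac:(lra)). unfold f in Hab. lra. }
  split.
  - split.
    + intros [l [c Hs]]. destruct (sol_prof D g lc cinf cs l c HD Hg Hs) as [Hl [_ Hf]].
      fold k in Hf. rewrite <- Hf. rewrite <- f0 at 1.
      apply (f_incr k lc cinf 0 l Hk Hlc Hc). lra.
    + intros Hlt. destruct (Ex Hlt) as [l [Hl Hf]]. exists l, (pr k lc cinf l). now apply Sol.
  - intros Hlt. destruct (Ex Hlt) as [l [Hl Hf]]. exists l. split; [|split].
    + exists (pr k lc cinf l). now apply Sol.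
    + intros l' c Hs. destruct (sol_prof D g lc cinf cs l' c HD Hg Hs) as [Hl' [E Hf']].
      fold k in E, Hf'.
      assert (l' = l) by (apply Inj; auto; unfold f; rewrite Hf'; symmetry; exact Hf).
      subst l'. split; [reflexivity| exact E].
    + intros x y H1 H2 H3. apply prof_decr; auto.
Qed.
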